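(* There is a satisfiability-preserving reduction from $\mathsf{C\text{-}RASP}$ to $\mathsf{C\text{-}RASP}$ with depth at most 2: there is a computable transformation mapping each $\mathsf{C\text{-}RASP}$ formula $\varphi$ to a $\mathsf{C\text{-}RASP}$ formula $\varphi'$ of depth at most $2$ (possibly over an alphabet extended by fresh propositions) such that $\varphi$ is satisfiable iff $\varphi'$ is satisfiable.
   Context: $\mathsf{C\text{-}RASP}$ formulas over a finite alphabet $\Sigma$: $\phi ::= \sigma \mid \Diamond^{-}\phi \mid \Box^{-}\phi \mid \neg\phi \mid \phi_1\wedge\phi_2 \mid \sum_{t\in\mathcal{T}}\alpha_t t\sim k$, terms $t ::= \#[\phi] \mid c$, with $\alpha_t,k,c\in\mathbb{Z}$, ${\sim}\in\{<,\le,=,\ge,>\}$. At position $i$ of $w$: $w,i\models\sigma$ iff $w_i=\sigma$; $w,i\models\Diamond^{-}\phi$ iff $w,j\models\phi$ for some $j<i$; $w,i\models\Box^{-}\phi$ iff $w,j\models\phi$ for all $j\le i$; $\#[\phi]$ evaluates to $|\{j\in[1,i]: w,j\models\phi\}|$; comparisons are integer comparisons. $w\models\phi$ iff $w,|w|\models\phi$; $\phi$ is satisfiable iff some string satisfies it. Depth: $\mathrm{dp}(\sigma)=\mathrm{dp}(c)=0$, $\neg$ preserves depth, $\wedge$ takes the maximum, $\mathrm{dp}(\#[\phi])=\mathrm{dp}(\Diamond^{-}\phi)=\mathrm{dp}(\Box^{-}\phi)=\mathrm{dp}(\phi)+1$, and a comparison has the maximal depth of its terms. *)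

(* Defs.v *)
From HB Require Import structures.
From mathcomp Require Import all_boot all_order all_algebra.
Set Implicit Arguments. Unset Strict Implicit. Unset Printing Implicit Defensive.
Import Order.TTheory GRing.Theory Num.Theory.
Local Open Scope ring_scope.

Inductive cmp := CLt | CLe | CEq | CGe | CGt.

Definition cmpb (c : cmp) (x y : int) : bool :=
  match c with
  | CLt => x < y | CLe => x <= y | CEq => x == y | CGe => y <= x | CGt => y < x
  end.

(* formulas over alphabet S; a comparison  sum_t alpha_t t ~ k  is
   represented by a finite list of (coefficient, term) pairs. *)
Inductive cform (S : Type) : Type :=
| Atom of S
| Dia of cform S
| Box of cform S
| Neg of cform S
| And of cform S & cform S
| Cmp of lin S & cmp & int
with lin (S : Type) : Type :=
| LNil
| LCons of int & term S & lin S
with term (S : Type) : Type :=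
| Cnt of cform S
| Const of int.

Arguments Atom {S}. Arguments Dia {S}. Arguments Box {S}. Arguments Neg {S}.
Arguments And {S}. Arguments Cmp {S}. Arguments LNil {S}. Arguments LCons {S}.
Arguments Cnt {S}. Arguments Const {S}.

(* Semantics: positions are 1-based, w_i = nth (i-1) of w. *)
Fixpoint sat (S : eqType) (w : seq S) (i : nat) (f : cform S) {struct f} : bool :=
  match f with
  | Atom a => (0 < i)%N && (onth w i.-1 == Some a)
  | Dia g => has (fun j => sat w j g) (iota 1 i.-1)
  | Box g => all (fun j => sat w j g) (iota 1 i)
  | Neg g => ~~ sat w i g
  | And g h => sat w i g && sat w i h
  | Cmp l c k => cmpb c (evl w i l) k
  end
with evl (S : eqType) (w : seq S) (i : nat) (l : lin S) {struct l} : int :=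
  match l with
  | LNil => 0
  | LCons a t l' => a * evt w i t + evl w i l'
  end
with evt (S : eqType) (w : seq S) (i : nat) (t : term S) {struct t} : int :=
  match t with
  | Cnt g => (count (fun j => sat w j g) (iota 1 i))%:Z
  | Const c => c
  end.

(* w |= phi iff w,|w| |= phi; strings are nonempty (position |w| >= 1). *)
Definition models (S : eqType) (w : seq S) (f : cform S) : bool :=
  (0 < size w)%N && sat w (size w) f.

Definition satisfiable (S : eqType) (f : cform S) : Prop :=
  exists w : seq S, models w f.

Fixpoint dp (S : Type) (f : cform S) {struct f} : nat :=
  match f with
  | Atom _ => 0
  | Dia g | Box g => (dp g).+1
  | Neg g => dp g
  | And g h => maxn (dp g) (dp h)
  | Cmp l _ _ => dpl l
  end%N
with dpl (S : Type) (l : lin S) {struct l} : nat :=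
  match l with
  | LNil => 0
  | LCons _ t l' => maxn (dpt t) (dpl l')
  end%N
with dpt (S : Type) (t : term S) {struct t} : nat :=
  match t with
  | Cnt g => (dp g).+1
  | Const _ => 0
  end%N.

(* number of subformula occurrences (postorder numbering) *)
Fixpoint sz (S : Type) (f : cform S) {struct f} : nat :=
  match f with
  | Atom _ => 1
  | Dia g | Box g | Neg g => (sz g).+1
  | And g h => (sz g + sz h).+1
  | Cmp l _ _ => (szl l).+1
  end%N
with szl (S : Type) (l : lin S) {struct l} : nat :=
  match l with
  | LNil => 0
  | LCons _ t l' => szt t + szl l'
  end%N
with szt (S : Type) (t : term S) {struct t} : nat :=
  match t with
  | Cnt g => sz g
  | Const _ => 0
  end%N.

Definition fTrue (S : Type) : cform S := Cmp LNil CEq 0.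
Definition fFalse (S : Type) : cform S := Cmp LNil CLt 0.
Definition fOr (S : Type) (a b : cform S) : cform S := Neg (And (Neg a) (Neg b)).
Definition fIff (S : Type) (a b : cform S) : cform S :=
  And (fOr (Neg a) b) (fOr a (Neg b)).
Definition bigOr (S : Type) (s : seq (cform S)) : cform S := foldr (@fOr S) (fFalse S) s.
Definition bigAnd (S : Type) (s : seq (cform S)) : cform S := foldr (@And S) (fTrue S) s.

(* extended alphabet: original letter + truth values of the K fresh propositions *)
Definition ext (S : finType) (K : nat) : finType := (S * K.-tuple bool)%type.

Definition isLetter (S : finType) (K : nat) (P : pred (ext S K)) : cform (ext S K) :=
  bigOr [seq Atom x | x <- enum P].

Definition prop (S : finType) (K : nat) (n : nat) : cform (ext S K) :=
  isLetter (fun x : ext S K => nth false x.2 n).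

Definition letter (S : finType) (K : nat) (a : S) : cform (ext S K) :=
  isLetter (fun x : ext S K => x.1 == a).

(* index of the root of a subformula occurrence g placed at offset b *)
Definition root (S : Type) (g : cform S) (b : nat) : nat := (b + sz g).-1.

Fixpoint shallowl (S : finType) (K : nat) (l : lin S) (b : nat) {struct l}
  : lin (ext S K) :=
  match l with
  | LNil => LNil
  | LCons a t l' =>
      LCons a (match t with
               | Cnt g => Cnt (prop S K (root g b))
               | Const c => Const c end)
            (shallowl K l' (b + szt t))
  end.

(* f with its immediate subformulas (placed from offset b) replaced by
   their fresh propositions; depth <= 1 *)
Definition shallow (S : finType) (K : nat) (f : cform S) (b : nat) : cform (ext S K) :=
  match f with
  | Atom a => letter K a
  | Dia g => Dia (prop S K (root g b))
  | Box g => Box (prop S K (root g b))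
  | Neg g => Neg (prop S K (root g b))
  | And g h => And (prop S K (root g b)) (prop S K (root h (b + sz g)))
  | Cmp l c k => Cmp (shallowl K l b) c k
  end.

Fixpoint cons (S : finType) (K : nat) (f : cform S) (b : nat) {struct f}
  : seq (cform (ext S K)) :=
  fIff (prop S K (root f b)) (shallow K f b) ::
  match f with
  | Atom _ => [::]
  | Dia g | Box g | Neg g => cons K g b
  | And g h => cons K g b ++ cons K h (b + sz g)
  | Cmp l _ _ => consl K l b
  end
with consl (S : finType) (K : nat) (l : lin S) (b : nat) {struct l}
  : seq (cform (ext S K)) :=
  match l with
  | LNil => [::]
  | LCons _ t l' => const K t b ++ consl K l' (b + szt t)
  end
with const (S : finType) (K : nat) (t : term S) (b : nat) {struct t}
  : seq (cform (ext S K)) :=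
  match t with
  | Cnt g => cons K g b
  | Const _ => [::]
  end.

Definition reduce (S : finType) (f : cform S) : cform (ext S (sz f)) :=
  And (Box (bigAnd (cons (sz f) f 0))) (prop S (sz f) (root f 0)).

(* Main.v *)
Require Import Defs.
From mathcomp Require Import all_boot all_order all_algebra zify.
Set Implicit Arguments. Unset Strict Implicit. Unset Printing Implicit Defensive.

Scheme cform_mut := Induction for cform Sort Prop
with lin_mut := Induction for lin Sort Prop
with term_mut := Induction for term Sort Prop.
Combined Scheme cform_lin_term_mut from cform_mut, lin_mut, term_mut.

Lemma sat_fOr (S : eqType) (w : seq S) j a b :
  sat w j (fOr a b) = sat w j a || sat w j b.
Proof. by rewrite /fOr /= -negb_or negbK. Qed.

Lemma sat_fIff (S : eqType) (w : seq S) j a b :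
  sat w j (fIff a b) = (sat w j a == sat w j b).
Proof. by rewrite /fIff /fOr /=; case: (sat w j a); case: (sat w j b). Qed.

Lemma sat_bigOr (S : eqType) (w : seq S) j s :
  sat w j (bigOr s) = has (sat w j) s.
Proof. by elim: s => [//|x s IH] /=; rewrite IH -negb_or negbK. Qed.

Lemma sat_bigAnd (S : eqType) (w : seq S) j s :
  sat w j (bigAnd s) = all (sat w j) s.
Proof. by elim: s => [//|x s IH] /=; rewrite IH. Qed.

Lemma onth_map (A B : Type) (f : A -> B) s i :
  onth (map f s) i = omap f (onth s i).
Proof. by elim: s i => [|x s IH] [|i] //=. Qed.

Lemma sat_isLetter (S : finType) K (w' : seq (ext S K)) P j :
  sat w' j (isLetter P) =
  (0 < j)%N && (if onth w' j.-1 is Some x then P x else false).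
Proof.
rewrite /isLetter sat_bigOr has_map.
rewrite (@eq_has _ _ (fun y => (0 < j)%N && (onth w' j.-1 == Some y))); last by [].
case: (0 < j)%N => /=; last by elim: (enum P).
case: (onth w' j.-1) => [x|]; last by elim: (enum P).
rewrite (@eq_has _ _ (pred1 x)); first by rewrite has_pred1 mem_enum.
by move=> y /=; rewrite (inj_eq (@Some_inj _)) eq_sym.
Qed.

Lemma sat_letter (S : finType) K (w' : seq (ext S K)) a j :
  sat w' j (letter K a) = sat (map fst w') j (Atom a).
Proof.
rewrite sat_isLetter /= onth_map.
by case: (onth w' j.-1) => [x|] /=; rewrite ?andbF.
Qed.

Lemma sat_prop (S : finType) K (w' : seq (ext S K)) n j :
  sat w' j (prop S K n) =
  (0 < j)%N && (if onth w' j.-1 is Some x then nth false x.2 n else false).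
Proof. exact: sat_isLetter. Qed.

Lemma dp_isLetter (S : finType) K (P : pred (ext S K)) : dp (isLetter P) = 0%N.
Proof. by rewrite /isLetter; elim: (enum P) => //= x s ->. Qed.

Lemma dp_shallowl (S : finType) K (l : lin S) b : (dpl (shallowl K l b) <= 1)%N.
Proof.
elim: l b => [//|a t l IH] b /=.
rewrite geq_max IH andbT.
by case: t => [g|c] //=; rewrite dp_isLetter.
Qed.

Lemma dp_shallow (S : finType) K (f : cform S) b : (dp (shallow K f b) <= 1)%N.
Proof.
case: f => [a|g|g|g|g h|l c k] /=; rewrite ?dp_isLetter //.
exact: dp_shallowl.
Qed.

Lemma dp_head (S : finType) K (f : cform S) b :
  (dp (fIff (prop S K (Defs.root f b)) (shallow K f b)) <= 1)%N.
Proof. by rewrite /= !maxnn dp_isLetter max0n; exact: dp_shallow. Qed.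

Lemma dp_cons (S : finType) K :
  (forall (f : cform S) b, all (fun x => dp x <= 1)%N (cons K f b)) /\
  (forall (l : lin S) b, all (fun x => dp x <= 1)%N (consl K l b)) /\
  (forall (t : term S) b, all (fun x => dp x <= 1)%N (const K t b)).
Proof.
apply: cform_lin_term_mut => //.
- by move=> a b; apply/andP; split; [exact: dp_head|].
- by move=> g IH b; apply/andP; split; [exact: dp_head|exact: IH].
- by move=> g IH b; apply/andP; split; [exact: dp_head|exact: IH].
- by move=> g IH b; apply/andP; split; [exact: dp_head|exact: IH].
- move=> g IHg h IHh b.
  have H : all (fun x => dp x <= 1)%N (cons K g b ++ cons K h (b + sz g)) by rewrite all_cat IHg IHh.
  by apply/andP; split; [exact: dp_head|exact: H].
- by move=> l IH c k b; apply/andP; split; [exact: dp_head|exact: IH].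
- by move=> a t IHt l IHl b; rewrite [consl _ _ _]/= all_cat IHt IHl.
Qed.

Lemma dp_reduce (S : finType) (phi : cform S) : (dp (reduce phi) <= 2)%N.
Proof.
rewrite /reduce [dp _]/= dp_isLetter maxn0 ltnS.
elim: (cons _ _ _) (proj1 (dp_cons S (sz phi)) phi 0%N) => [//|x s IH] /= /andP[Hx Hs].
by rewrite geq_max Hx IH.
Qed.

Lemma sz_gt0 (S : Type) (f : cform S) : (0 < sz f)%N.
Proof. by case: f. Qed.

Lemma rootE (S : Type) (f : cform S) b : Defs.root f b = (b + (sz f).-1)%N.
Proof. by rewrite /Defs.root -(prednK (sz_gt0 f)) addnS. Qed.

Fixpoint labs (S : eqType) (w : seq S) j (f : cform S) {struct f} : seq bool :=
  match f with
  | Atom _ => [:: sat w j f]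
  | Dia g | Box g | Neg g => labs w j g ++ [:: sat w j f]
  | And g h => labs w j g ++ labs w j h ++ [:: sat w j f]
  | Cmp l _ _ => labsl w j l ++ [:: sat w j f]
  end
with labsl (S : eqType) (w : seq S) j (l : lin S) {struct l} : seq bool :=
  match l with
  | LNil => [::]
  | LCons _ t l' => labst w j t ++ labsl w j l'
  end
with labst (S : eqType) (w : seq S) j (t : term S) {struct t} : seq bool :=
  match t with
  | Cnt g => labs w j g
  | Const _ => [::]
  end.

Lemma size_labs (S : eqType) (w : seq S) j :
  (forall f, size (labs w j f) = sz f) /\
  (forall l, size (labsl w j l) = szl l) /\
  (forall t, size (labst w j t) = szt t).
Proof.
apply: cform_lin_term_mut => //=.
- by move=> g IH; rewrite size_cat IH addn1.
- by move=> g IH; rewrite size_cat IH addn1.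
- by move=> g IH; rewrite size_cat IH addn1.
- by move=> g IHg h IHh; rewrite !size_cat IHg IHh /=; lia.
- by move=> l IH c k; rewrite size_cat IH addn1.
- by move=> a t IHt l IHl; rewrite size_cat IHt IHl.
Qed.

Lemma size_labsf (S : eqType) (w : seq S) j f : size (labs w j f) = sz f.
Proof. exact: (proj1 (size_labs w j)). Qed.
Lemma size_labsl (S : eqType) (w : seq S) j l : size (labsl w j l) = szl l.
Proof. exact: (proj1 (proj2 (size_labs w j))). Qed.
Lemma size_labst (S : eqType) (w : seq S) j t : size (labst w j t) = szt t.
Proof. exact: (proj2 (proj2 (size_labs w j))). Qed.

Lemma nth_catl (T : Type) (x0 : T) s t i : (i < size s)%N -> nth x0 (s ++ t) i = nth x0 s i.
Proof. by move=> H; rewrite nth_cat H. Qed.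

Lemma nth_catr (T : Type) (x0 : T) s t i : nth x0 (s ++ t) (size s + i) = nth x0 t i.
Proof. by rewrite nth_cat ltnNge leq_addr /= addKn. Qed.

Lemma last_labs (S : eqType) (w : seq S) j f :
  nth false (labs w j f) (sz f).-1 = sat w j f.
Proof.
have [Hf [Hl Ht]] := size_labs w j.
case: f => [a|g|g|g|g h|l c k] //=.
- by rewrite -(Hf g) -[size _]addn0 nth_catr.
- by rewrite -(Hf g) -[size _]addn0 nth_catr.
- by rewrite -(Hf g) -[size _]addn0 nth_catr.
- by rewrite -(Hf g) -(Hf h) -[size (labs w j h)]addn0 nth_catr nth_catr.
- by rewrite -(Hl l) -[size _]addn0 nth_catr.
Qed.

Lemma all_ccat (T : Type) (a : pred T) x s1 s2 :
  all a (x :: s1 ++ s2) -> all a s1 /\ all a s2.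
Proof. by rewrite /= all_cat => /andP[_ /andP[]]. Qed.

Section Main.
Variables (S : finType) (K : nat) (w' : seq (ext S K)).
Let w := map fst w'.
Let N := size w'.

Definition RC (g : cform S) b :=
  forall j, (0 < j <= N)%N -> sat w' j (prop S K (Defs.root g b)) = sat w j g.

Definition RCt (t : term S) b : Prop :=
  match t with Cnt g => RC g b | Const _ => True end.

Fixpoint RCl (l : lin S) b : Prop :=
  match l with LNil => True | LCons _ t l' => RCt t b /\ RCl l' (b + szt t) end.

Definition kids_ok (f : cform S) b : Prop :=
  match f with
  | Atom _ => True
  | Dia g | Box g | Neg g => RC g b
  | And g h => RC g b /\ RC h (b + sz g)
  | Cmp l _ _ => RCl l b
  end.

Lemma shallowl_ok l b : RCl l b ->
  forall j, (0 < j <= N)%N -> evl w' j (shallowl K l b) = evl w j l.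
Proof.
elim: l b => [//|a t l IH] b /= [Ht Hl] j Hj.
rewrite (IH _ Hl j Hj); clear Hl IH; congr (_ * _ + _)%R.
case: t Ht => [g|c] //= Hg.
congr (Posz _); apply: eq_in_count => j'; rewrite mem_iota => Hj'.
apply: Hg; lia.
Qed.

Lemma shallow_ok f b : kids_ok f b ->
  forall j, (0 < j <= N)%N -> sat w' j (shallow K f b) = sat w j f.
Proof.
case: f => [a|g|g|g|g h|l c k] /= Hk j Hj.
- exact: sat_letter.
- by apply: eq_in_has => j'; rewrite mem_iota => Hj'; apply: Hk; lia.
- by apply: eq_in_all => j'; rewrite mem_iota => Hj'; apply: Hk; lia.
- by rewrite Hk.
- by case: Hk => H1 H2; rewrite H1 // H2.
- by rewrite shallowl_ok.
Qed.

Lemma head_step f b : kids_ok f b ->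
  (forall j, (0 < j <= N)%N -> sat w' j (fIff (prop S K (Defs.root f b)) (shallow K f b))) ->
  RC f b.
Proof.
move=> Hk H j Hj; move: (H j Hj); rewrite sat_fIff => /eqP ->.
exact: shallow_ok.
Qed.

Lemma dirB :
  (forall f b, (forall j, (0 < j <= N)%N -> all (sat w' j) (cons K f b)) -> RC f b) /\
  (forall l b, (forall j, (0 < j <= N)%N -> all (sat w' j) (consl K l b)) -> RCl l b) /\
  (forall t b, (forall j, (0 < j <= N)%N -> all (sat w' j) (const K t b)) -> RCt t b).
Proof.
apply: cform_lin_term_mut => //.
- by move=> a b H; apply: head_step => // j Hj; case/andP: (H j Hj).
- move=> g IH b H; apply: head_step; last by move=> j Hj; case/andP: (H j Hj).
  by apply: IH => j Hj; case/andP: (H j Hj).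
- move=> g IH b H; apply: head_step; last by move=> j Hj; case/andP: (H j Hj).
  by apply: IH => j Hj; case/andP: (H j Hj).
- move=> g IH b H; apply: head_step; last by move=> j Hj; case/andP: (H j Hj).
  by apply: IH => j Hj; case/andP: (H j Hj).
- move=> g IHg h IHh b H; apply: head_step; last by move=> j Hj; case/andP: (H j Hj).
  split.
    by apply: IHg => j Hj; have [] := all_ccat (H j Hj).
  by apply: IHh => j Hj; have [] := all_ccat (H j Hj).
- move=> l IH c k b H; apply: head_step; last by move=> j Hj; case/andP: (H j Hj).
  by apply: IH => j Hj; case/andP: (H j Hj).
- move=> a t IHt l IHl b H; split.
    by apply: IHt => j Hj; move: (H j Hj); rewrite /= all_cat => /andP[].
  by apply: IHl => j Hj; move: (H j Hj); rewrite /= all_cat => /andP[].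
Qed.

Definition LB f b := forall j, (0 < j <= N)%N -> forall i, (i < sz f)%N ->
  sat w' j (prop S K (b + i)) = nth false (labs w j f) i.
Definition LBl l b := forall j, (0 < j <= N)%N -> forall i, (i < szl l)%N ->
  sat w' j (prop S K (b + i)) = nth false (labsl w j l) i.
Definition LBt t b := forall j, (0 < j <= N)%N -> forall i, (i < szt t)%N ->
  sat w' j (prop S K (b + i)) = nth false (labst w j t) i.

Lemma LB_RC f b : LB f b -> RC f b.
Proof.
move=> H j Hj; rewrite rootE H //; first exact: last_labs.
by rewrite prednK // sz_gt0.
Qed.

Lemma head_step2 f b : kids_ok f b -> RC f b ->
  forall j, (0 < j <= N)%N -> sat w' j (fIff (prop S K (Defs.root f b)) (shallow K f b)).
Proof.
by move=> Hk Hr j Hj; rewrite sat_fIff Hr // shallow_ok.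
Qed.

Lemma dirD :
  (forall f b, LB f b -> (forall j, (0 < j <= N)%N -> all (sat w' j) (cons K f b)) /\ RC f b) /\
  (forall l b, LBl l b -> (forall j, (0 < j <= N)%N -> all (sat w' j) (consl K l b)) /\ RCl l b) /\
  (forall t b, LBt t b -> (forall j, (0 < j <= N)%N -> all (sat w' j) (const K t b)) /\ RCt t b).
Proof.
apply: cform_lin_term_mut => //.
- move=> a b H; have Hr := LB_RC H; split=> // j Hj.
  by apply/andP; split=> //; apply: head_step2.
- move=> g IH b H; have Hr := LB_RC H.
  have [Hc Hg] : (forall j, (0 < j <= N)%N -> all (sat w' j) (cons K g b)) /\ RC g b.
    apply: IH => j Hj i Hi; rewrite H //=; last by move: Hi; set n := sz g; lia.
    by rewrite nth_catl // size_labsf.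
  by split=> // j Hj; apply/andP; split; [apply: head_step2 | apply: Hc].
- move=> g IH b H; have Hr := LB_RC H.
  have [Hc Hg] : (forall j, (0 < j <= N)%N -> all (sat w' j) (cons K g b)) /\ RC g b.
    apply: IH => j Hj i Hi; rewrite H //=; last by move: Hi; set n := sz g; lia.
    by rewrite nth_catl // size_labsf.
  by split=> // j Hj; apply/andP; split; [apply: head_step2 | apply: Hc].
- move=> g IH b H; have Hr := LB_RC H.
  have [Hc Hg] : (forall j, (0 < j <= N)%N -> all (sat w' j) (cons K g b)) /\ RC g b.
    apply: IH => j Hj i Hi; rewrite H //=; last by move: Hi; set n := sz g; lia.
    by rewrite nth_catl // size_labsf.
  by split=> // j Hj; apply/andP; split; [apply: head_step2 | apply: Hc].
- move=> g IHg h IHh b H; have Hr := LB_RC H.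
  have [Hcg Hg] : (forall j, (0 < j <= N)%N -> all (sat w' j) (cons K g b)) /\ RC g b.
    apply: IHg => j Hj i Hi; rewrite H //=; last by move: Hi; set n := sz g; set m := sz h; lia.
    by rewrite nth_catl // size_labsf.
  have [Hch Hh] : (forall j, (0 < j <= N)%N -> all (sat w' j) (cons K h (b + sz g))) /\ RC h (b + sz g).
    apply: IHh => j Hj i Hi; rewrite -addnA H //=; last by move: Hi; set n := sz g; set m := sz h; lia.
    by rewrite -(size_labsf w j g) nth_catr nth_catl // size_labsf.
  split=> // j Hj.
  have Hc : all (sat w' j) (cons K g b ++ cons K h (b + sz g)) by rewrite all_cat Hcg // Hch.
  by apply/andP; split; [apply: head_step2 | exact: Hc].
- move=> l IH c k b H; have Hr := LB_RC H.
  have [Hc Hg] : (forall j, (0 < j <= N)%N -> all (sat w' j) (consl K l b)) /\ RCl l b.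
    apply: IH => j Hj i Hi; rewrite H //=; last by move: Hi; set n := szl l; lia.
    by rewrite nth_catl // size_labsl.
  by split=> // j Hj; apply/andP; split; [apply: head_step2 | apply: Hc].
- move=> a t IHt l IHl b H.
  have [Hct Htt] : (forall j, (0 < j <= N)%N -> all (sat w' j) (const K t b)) /\ RCt t b.
    apply: IHt => j Hj i Hi; rewrite H //=; last by move: Hi; set n := szt t; set m := szl l; lia.
    by rewrite nth_catl // size_labst.
  have [Hcl Hll] : (forall j, (0 < j <= N)%N -> all (sat w' j) (consl K l (b + szt t))) /\ RCl l (b + szt t).
    apply: IHl => j Hj i Hi; rewrite -addnA H //=; last by move: Hi; set n := szt t; set m := szl l; lia.
    by rewrite -(size_labst w j t) nth_catr.
  by split=> // j Hj; rewrite /= all_cat Hct // Hcl.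
Qed.

End Main.

Fixpoint build (A B : Type) (F : nat -> B) (s : seq A) (k : nat) : seq (A * B) :=
  match s with
  | [::] => [::]
  | x :: s' => (x, F k) :: build F s' k.+1
  end.

Lemma onth_build (A B : Type) (F : nat -> B) s k i :
  onth (build F s k) i = omap (fun x : A => (x, F (k + i)%N)) (onth s i).
Proof.
elim: s k i => [|x s IH] k [|i] //=; first by rewrite addn0.
by rewrite IH addSnnS.
Qed.

Lemma map_fst_build (A B : Type) (F : nat -> B) s k : map (@fst A B) (build F s k) = s.
Proof. by elim: s k => [//|x s IH] k /=; rewrite IH. Qed.

Lemma size_build (A B : Type) (F : nat -> B) s k : size (build F s k) = size (s : seq A).
Proof. by elim: s k => [//|x s IH] k /=; rewrite IH. Qed.

Theorem propositionD1 (S : finType) (phi : cform S) :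
  (dp (reduce phi) <= 2)%N /\ (satisfiable phi <-> satisfiable (reduce phi)).
Proof.
split; first exact: dp_reduce.
split.
- case=> w /andP[Hn Hsat].
  pose T j : (sz phi).-tuple bool :=
    @Tuple (sz phi) bool (labs w j phi) (introT eqP (size_labsf w j phi)).
  pose w' := build T w 1.
  have Hw : map fst w' = w by exact: map_fst_build.
  have HN : size w' = size w by exact: size_build.
  have HLB : LB w' phi 0.
    move=> j Hj i Hi; rewrite sat_prop Hw onth_build.
    case E: (onth w j.-1) => [x|] /=.
      by case/andP: Hj => H1 _; rewrite add1n prednK // add0n H1.
    have := onthTE w j.-1; rewrite E /= -HN; case/andP: Hj => H1 H2.
    by rewrite prednK // H2.
  have [Hc Hr] := proj1 (dirD w') phi 0 HLB.
  exists w'; rewrite /models HN Hn /=.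
  apply/andP; split.
    apply/allP => j; rewrite mem_iota => Hj; rewrite sat_bigAnd; apply: Hc.
    by rewrite HN; move: Hj; rewrite add1n.
  by rewrite Hr ?Hw // HN Hn leqnn.
- case=> w' /andP[Hn Hsat].
  exists (map fst w'); rewrite /models size_map Hn /=.
  move: Hsat => /andP[Hbox Hp].
  have Hbox' : all (fun j => sat w' j (bigAnd (cons (sz phi) phi 0))) (iota 1 (size w')) := Hbox.
  have Hc : forall j, (0 < j <= size w')%N -> all (sat w' j) (cons (sz phi) phi 0).
    move=> j Hj; move/allP: Hbox' => /(_ j); rewrite mem_iota sat_bigAnd; apply.
    by rewrite add1n.
  have Hr := proj1 (dirB w') phi 0 Hc.
  by rewrite -Hr // Hn leqnn.
Qed.
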